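(* Consider a bipartite system with OPF sets $\mathcal F_{d_{\sf A}}$, $\mathcal F_{d_{\sf B}}$, $\mathcal F_{d_{\sf A}d_{\sf B}}$ and affine representations $\Gamma^{d_{\sf A}}$, $\Gamma^{d_{\sf B}}$, $\Gamma^{d_{\sf A}d_{\sf B}}$. If the restriction of $\Gamma^{d_{\sf A}d_{\sf B}}$ to $\mathrm{SU}(d_{\sf A})\times\mathrm{SU}(d_{\sf B})$ (embedded as $U_{\sf A}\otimes U_{\sf B}$) contains a subrepresentation $1^{d_{\sf A}}\boxtimes1^{d_{\sf B}}$, then the composite system is holistic, i.e. not locally tomographic: for bases $\{F^i_{\sf A}\}$ of $V_{d_{\sf A}}$ and $\{F^j_{\sf B}\}$ of $V_{d_{\sf B}}$, $\{F^i_{\sf A}\star F^j_{\sf B}\}_{i,j}$ is not a basis of $V_{d_{\sf A}d_{\sf B}}$.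
   Context: An OPF on $\mathbb C^d$ is a function from rays of $\mathbb C^d$ to $[0,1]$; $\mathcal F_d$ contains the unit OPF ${\bf u}\equiv1$, satisfies (C1): $F\circ U:\psi\mapsto F(U\psi)$ is in $\mathcal F_d$ for $F\in\mathcal F_d$, $U\in\mathrm{SU}(d)$, and the Finiteness Principle: the real span $V_d$ of $\mathcal F_d$ is finite-dimensional. The associated representation $\bar\Gamma^d$ on $V_d$ is $\bar\Gamma^d(U)F=F\circ U$; it contains the trivial representation $1^d$ exactly once (spanned by ${\bf u}$), and the affine representation $\Gamma^d$ is defined by $\bar\Gamma^d=1^d\oplus\Gamma^d$. The product $\star:\mathcal F_{d_{\sf A}}\times\mathcal F_{d_{\sf B}}\to\mathcal F_{d_{\sf A}d_{\sf B}}$ is bilinear, satisfies ${\bf u}_{\sf A}\star{\bf u}_{\sf B}={\bf u}_{{\sf A}{\sf B}}$, and $(F_{\sf A}\star F_{\sf B})\circ(U_{\sf A}\otimes U_{\sf B})=(F_{\sf A}\circ U_{\sf A})\star(F_{\sf B}\circ U_{\sf B})$. $1^d$ is the trivial representation of $\mathrm{SU}(d)$ and $\boxtimes$ the outer tensor product. *)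

(* Defs.v *)
From HB Require Import structures.
From mathcomp Require Import all_boot all_order all_algebra.
From mathcomp Require Import complex mxtens.
From mathcomp Require Import reals.

Set Implicit Arguments.
Unset Strict Implicit.
Unset Printing Implicit Defensive.

Import Order.TTheory GRing.Theory Num.Theory.
Local Open Scope ring_scope.

Section OPF.
Variable R : realType.
Local Notation C := (R[i]).

(* Rays of C^d are represented by nonzero vectors; a function on rays is a
   function on nonzero vectors that is invariant under nonzero rescaling
   (this invariance is imposed in [OPF_set]). *)
Definition nzvec (d : nat) := {v : 'cV[C]_d | v != 0}.
Definition ray_fun (d : nat) := nzvec d -> R.

(* action of a matrix on a nonzero vector (the fallback [psi] is only used
   when [M *m psi = 0], which never happens for invertible M) *)
Definition actv d (M : 'M[C]_d) (psi : nzvec d) : nzvec d :=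
  odflt psi (insub (M *m val psi)).

(* rescaling of a nonzero vector (fallback only used for c = 0) *)
Definition scalev d (c : C) (psi : nzvec d) : nzvec d :=
  odflt psi (insub (c *: val psi)).

Definition opf_comp d (F : ray_fun d) (M : 'M[C]_d) : ray_fun d :=
  fun psi => F (actv M psi).

Definition is_SU d (U : 'M[C]_d) : Prop :=
  (map_mx conjc U)^T *m U = 1%:M /\ \det U = 1.

Definition unit_fun d : ray_fun d := fun _ => 1.

Definition lin_comb d (I : finType) (c : I -> R) (g : I -> ray_fun d)
  : ray_fun d := fun psi => \sum_(i : I) c i * g i psi.

Definition span d (S : ray_fun d -> Prop) (f : ray_fun d) : Prop :=
  exists n (c : 'I_n -> R) (g : 'I_n -> ray_fun d),
    (forall i, S (g i)) /\ f = lin_comb c g.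

Definition finite_dim d (S : ray_fun d -> Prop) : Prop :=
  exists n (g : 'I_n -> ray_fun d),
    forall f, span S f -> span (fun h => exists i, h = g i) f.

Definition lin_indep d (I : finType) (b : I -> ray_fun d) : Prop :=
  forall c : I -> R, lin_comb c b = (fun _ => 0) -> forall i, c i = 0.

Definition is_basis d (S : ray_fun d -> Prop) (I : finType)
  (b : I -> ray_fun d) : Prop :=
  [/\ forall i, span S (b i), lin_indep b &
      forall f, span S f -> span (fun h => exists i, h = b i) f].

(* The trivial representation occurs in bar-Gamma^d exactly once, spanned by
   the unit OPF: the SU(d)-fixed vectors of V_d are exactly the multiples of u. *)
Definition trivial_once d (S : ray_fun d -> Prop) : Prop :=
  forall f, span S f ->
    ((forall U, is_SU U -> opf_comp f U = f) <-> exists a : R, f = (fun _ => a)).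

Definition OPF_set d (S : ray_fun d -> Prop) : Prop :=
  S (@unit_fun d) /\
  (forall F psi, S F -> 0 <= F psi <= 1) /\
  (forall F psi (c : C), S F -> c != 0 -> F (scalev c psi) = F psi) /\
  (forall F U, S F -> is_SU U -> S (opf_comp F U)) /\
  finite_dim S /\
  trivial_once S.

Definition OPF_product dA dB (SA : ray_fun dA -> Prop) (SB : ray_fun dB -> Prop)
  (SAB : ray_fun (dA * dB) -> Prop)
  (star : ray_fun dA -> ray_fun dB -> ray_fun (dA * dB)) : Prop :=
  [/\ (forall F G, SA F -> SB G -> SAB (star F G)),
      (forall (a : R) F F' G, span SA F -> span SA F' -> span SB G ->
         star (fun psi => a * F psi + F' psi) G
         = (fun psi => a * star F G psi + star F' G psi)),
      (forall (a : R) F G G', span SA F -> span SB G -> span SB G' ->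
         star F (fun psi => a * G psi + G' psi)
         = (fun psi => a * star F G psi + star F G' psi)),
      star (@unit_fun dA) (@unit_fun dB) = @unit_fun (dA * dB) &
      (forall F G UA UB, SA F -> SB G -> is_SU UA -> is_SU UB ->
         opf_comp (star F G) (UA *t UB) = star (opf_comp F UA) (opf_comp G UB))].

(* W is (the carrier of) the affine representation Gamma^d: an SU(d)-invariant
   subspace of V_d with V_d = R u (+) W. *)
Definition affine_rep d (S : ray_fun d -> Prop) (W : ray_fun d -> Prop) : Prop :=
  (forall f, W f -> span S f) /\
  W (fun _ => 0) /\
  (forall (a : R) f g, W f -> W g -> W (fun psi => a * f psi + g psi)) /\
  (forall f U, W f -> is_SU U -> W (opf_comp f U)) /\
  (forall a : R, W (fun _ => a) -> a = 0) /\
  (forall f, span S f -> exists w (a : R), W w /\ f = (fun psi => w psi + a)).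

End OPF.

(* Main.v *)
Require Import Defs.
From HB Require Import structures.
From mathcomp Require Import all_boot all_order all_algebra.
From mathcomp Require Import complex mxtens.
From mathcomp Require Import reals.
From Stdlib Require Import FunctionalExtensionality ClassicalEpsilon.
From mathcomp Require Import ring lra.
Set Implicit Arguments.
Unset Strict Implicit.
Import Order.TTheory GRing.Theory Num.Theory.
Local Open Scope ring_scope.

Section Gen.
Variable R : realType.
Local Notation C := (R[i]).

Definition zf d : ray_fun R d := fun _ => 0.

Definition closedP d (P : ray_fun R d -> Prop) :=
  P (@zf d) /\ forall (a : R) f g, P f -> P g -> P (fun psi => a * f psi + g psi).

Lemma closed_seq d (P : ray_fun R d -> Prop) (I : Type) (c : I -> R) g (s : seq I) :
  closedP P -> (forall i, P (g i)) ->
  P (fun psi => \sum_(i <- s) c i * g i psi).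
Proof.
move=> [P0 PD] Pg; elim: s => [|x s IH].
  have -> : (fun psi => \sum_(i <- [::]) c i * g i psi) = @zf d.
    by apply: functional_extensionality => psi; rewrite big_nil.
  exact: P0.
have -> : (fun psi => \sum_(i <- x :: s) c i * g i psi)
   = (fun psi => c x * g x psi + \sum_(i <- s) c i * g i psi).
  by apply: functional_extensionality => psi; rewrite big_cons.
exact: PD.
Qed.

Lemma closed_lin d (P : ray_fun R d -> Prop) (I : finType) (c : I -> R) g :
  closedP P -> (forall i, P (g i)) -> P (lin_comb c g).
Proof. exact: closed_seq. Qed.

Lemma span_closed d (S : ray_fun R d -> Prop) : closedP (Defs.span S).
Proof.
split.
  exists 0%N, (fun _ => 0), (fun _ => @zf d); split; first by case.
  by apply: functional_extensionality => psi; rewrite /lin_comb big_ord0.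
move=> a f g [n1 [c1 [g1 [Hg1 ->]]]] [n2 [c2 [g2 [Hg2 ->]]]].
exists (n1 + n2)%N,
  (fun k => match split k with inl i => a * c1 i | inr j => c2 j end),
  (fun k => match split k with inl i => g1 i | inr j => g2 j end).
split.
  by move=> k; case: (split k).
apply: functional_extensionality => psi.
rewrite /lin_comb big_split_ord /= mulr_sumr.
congr (_ + _); apply: eq_bigr => i _.
  by rewrite (unsplitK (inl _ : 'I_n1 + 'I_n2)) mulrA.
by rewrite (unsplitK (inr _ : 'I_n1 + 'I_n2)).
Qed.

Lemma span_in d (S : ray_fun R d -> Prop) f : S f -> Defs.span S f.
Proof.
move=> Sf; exists 1%N, (fun _ => 1), (fun _ => f); split => //.
by apply: functional_extensionality => psi; rewrite /lin_comb big_ord1 mul1r.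
Qed.

Lemma span_lin d (S : ray_fun R d -> Prop) (I : finType) (c : I -> R) g :
  (forall i, Defs.span S (g i)) -> Defs.span S (lin_comb c g).
Proof. by move=> H; apply: closed_lin => //; exact: span_closed. Qed.

Lemma basis_coord d (S : ray_fun R d -> Prop) (I : finType) (b : I -> ray_fun R d) f :
  is_basis S b -> Defs.span S f -> exists c, f = lin_comb c b.
Proof.
move=> [_ _ Hsp] /Hsp [n [c [g [Hg ->]]]].
have Pcl : closedP (fun f => exists c, f = lin_comb c b).
  split.
    exists (fun _ => 0); apply: functional_extensionality => psi.
    by rewrite /lin_comb /zf big1 // => i _; rewrite mul0r.
  move=> a f1 f2 [c1 ->] [c2 ->]; exists (fun i => a * c1 i + c2 i).
  apply: functional_extensionality => psi.
  rewrite /lin_comb mulr_sumr -big_split; apply: eq_bigr => i _.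
  by rewrite mulrDl mulrA.
apply: (closed_lin c Pcl) => k; case: (Hg k) => i ->.
exists (fun j => (j == i)%:R); apply: functional_extensionality => psi.
rewrite /lin_comb (bigD1 i) //= eqxx mul1r big1 ?addr0 // => j /negbTE ->.
by rewrite mul0r.
Qed.


Lemma opf_comp_lin d (I : finType) (c : I -> R) (g : I -> ray_fun R d) M :
  opf_comp (lin_comb c g) M = lin_comb c (fun i => opf_comp (g i) M).
Proof. by []. Qed.

Lemma span_const d (S : ray_fun R d -> Prop) (a : R) :
  OPF_set S -> Defs.span S (fun _ => a).
Proof.
move=> [HU _].
have -> : (fun _ : nzvec R d => a) = (fun psi => a * @unit_fun R d psi + @zf d psi).
  by apply: functional_extensionality => psi; rewrite /unit_fun /zf mulr1 addr0.
apply: (span_closed S).2; [exact: span_in | exact: (span_closed S).1].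
Qed.

Section Star.
Variables (dA dB : nat) (SA : ray_fun R dA -> Prop) (SB : ray_fun R dB -> Prop)
  (SAB : ray_fun R (dA * dB) -> Prop)
  (star : ray_fun R dA -> ray_fun R dB -> ray_fun R (dA * dB)).
Hypothesis HP : OPF_product SA SB SAB star.

Lemma star0l G : Defs.span SB G -> star (@zf dA) G = @zf (dA * dB).
Proof.
case: HP => _ Hl _ _ _ HG.
have Z := (span_closed SA).1.
have := Hl (-1) _ _ _ Z Z HG.
have -> : (fun psi => -1 * @zf dA psi + @zf dA psi) = @zf dA.
  by apply: functional_extensionality => psi; rewrite /zf mulr0 addr0.
move=> ->; apply: functional_extensionality => psi.
by rewrite mulN1r addNr.
Qed.

Lemma star0r F : Defs.span SA F -> star F (@zf dB) = @zf (dA * dB).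
Proof.
case: HP => _ _ Hr _ _ HF.
have Z := (span_closed SB).1.
have := Hr (-1) _ _ _ HF Z Z.
have -> : (fun psi => -1 * @zf dB psi + @zf dB psi) = @zf dB.
  by apply: functional_extensionality => psi; rewrite /zf mulr0 addr0.
move=> ->; apply: functional_extensionality => psi.
by rewrite mulN1r addNr.
Qed.

Lemma star_seq_l (I : Type) (c : I -> R) f G (s : seq I) :
  (forall i, Defs.span SA (f i)) -> Defs.span SB G ->
  star (fun psi => \sum_(i <- s) c i * f i psi) G
  = (fun psi => \sum_(i <- s) c i * star (f i) G psi).
Proof.
move=> Hf HG; case: HP => _ Hl _ _ _.
elim: s => [|x s IH].
  have -> : (fun psi => \sum_(i <- [::]) c i * f i psi) = @zf dA.
    by apply: functional_extensionality => psi; rewrite big_nil.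
  rewrite star0l //; apply: functional_extensionality => psi.
  by rewrite big_nil.
have -> : (fun psi => \sum_(i <- x :: s) c i * f i psi)
   = (fun psi => c x * f x psi + \sum_(i <- s) c i * f i psi).
  by apply: functional_extensionality => psi; rewrite big_cons.
rewrite Hl //; last exact: closed_seq (span_closed SA) Hf.
rewrite IH; apply: functional_extensionality => psi.
by rewrite big_cons.
Qed.

Lemma star_seq_r (I : Type) (c : I -> R) F g (s : seq I) :
  Defs.span SA F -> (forall i, Defs.span SB (g i)) ->
  star F (fun psi => \sum_(i <- s) c i * g i psi)
  = (fun psi => \sum_(i <- s) c i * star F (g i) psi).
Proof.
move=> HF Hg; case: HP => _ _ Hr _ _.
elim: s => [|x s IH].
  have -> : (fun psi => \sum_(i <- [::]) c i * g i psi) = @zf dB.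
    by apply: functional_extensionality => psi; rewrite big_nil.
  rewrite star0r //; apply: functional_extensionality => psi.
  by rewrite big_nil.
have -> : (fun psi => \sum_(i <- x :: s) c i * g i psi)
   = (fun psi => c x * g x psi + \sum_(i <- s) c i * g i psi).
  by apply: functional_extensionality => psi; rewrite big_cons.
rewrite Hr //; last exact: closed_seq (span_closed SB) Hg.
rewrite IH; apply: functional_extensionality => psi.
by rewrite big_cons.
Qed.

Lemma star_lin_l (I : finType) (c : I -> R) f G :
  (forall i, Defs.span SA (f i)) -> Defs.span SB G ->
  star (lin_comb c f) G = lin_comb c (fun i => star (f i) G).
Proof. exact: star_seq_l. Qed.

Lemma star_lin_r (I : finType) (c : I -> R) F g :
  Defs.span SA F -> (forall i, Defs.span SB (g i)) ->
  star F (lin_comb c g) = lin_comb c (fun i => star F (g i)).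
Proof. exact: star_seq_r. Qed.

Hypothesis HA : OPF_set SA.
Hypothesis HB : OPF_set SB.

Lemma span_comp d (S : ray_fun R d -> Prop) F U :
  OPF_set S -> Defs.span S F -> is_SU U -> Defs.span S (opf_comp F U).
Proof.
move=> [_ [_ [_ [HC _]]]] [n [c [g [Hg ->]]]] HU.
rewrite opf_comp_lin; apply: span_lin => i; apply: span_in; exact: HC.
Qed.

Lemma equiv_span F G UA UB : Defs.span SA F -> Defs.span SB G ->
  is_SU UA -> is_SU UB ->
  opf_comp (star F G) (UA *t UB) = star (opf_comp F UA) (opf_comp G UB).
Proof.
move=> HF HG HUA HUB.
case: (HF) => [n [c [g [Hg EF]]]]; case: (HG) => [m [e [h [Hh EG]]]].
have sg : forall i, Defs.span SA (g i) by move=> i; exact: span_in.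
have sh : forall i, Defs.span SB (h i) by move=> i; exact: span_in.
have sgU : forall i, Defs.span SA (opf_comp (g i) UA).
  by move=> i; apply: span_in; exact: HA.2.2.2.1.
have shU : forall i, Defs.span SB (opf_comp (h i) UB).
  by move=> i; apply: span_in; exact: HB.2.2.2.1.
rewrite {1}EF {1}EG star_lin_l //; last by rewrite -EG.
rewrite EF EG !opf_comp_lin star_lin_l //; last by rewrite -opf_comp_lin; exact: span_lin.
apply: functional_extensionality => psi.
rewrite /lin_comb; apply: eq_bigr => i _; congr (_ * _).
rewrite star_lin_r // star_lin_r //.
rewrite opf_comp_lin /lin_comb; apply: eq_bigr => k _; congr (_ * _).
case: HP => _ _ _ _ Heq.
rewrite Heq //.
Qed.

Lemma starC_l (a : R) G : Defs.span SB G ->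
  star (fun _ => a) G = (fun psi => a * star (@unit_fun R dA) G psi).
Proof.
move=> HG; case: HP => _ Hl _ _ _.
have -> : (fun _ : nzvec R dA => a) = (fun psi => a * @unit_fun R dA psi + @zf dA psi).
  by apply: functional_extensionality => psi; rewrite /unit_fun /zf mulr1 addr0.
have Z := (span_closed SA).1; have U := span_in HA.1.
rewrite Hl //.
rewrite star0l //; apply: functional_extensionality => psi.
by rewrite /zf addr0.
Qed.

Lemma starC_r (b : R) F : Defs.span SA F ->
  star F (fun _ => b) = (fun psi => b * star F (@unit_fun R dB) psi).
Proof.
move=> HF; case: HP => _ _ Hr _ _.
have -> : (fun _ : nzvec R dB => b) = (fun psi => b * @unit_fun R dB psi + @zf dB psi).
  by apply: functional_extensionality => psi; rewrite /unit_fun /zf mulr1 addr0.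
have Z := (span_closed SB).1; have U := span_in HB.1.
rewrite Hr //.
rewrite star0r //; apply: functional_extensionality => psi.
by rewrite /zf addr0.
Qed.

Variables (n m : nat) (bA : 'I_n -> ray_fun R dA) (bB : 'I_m -> ray_fun R dB).
Hypotheses (BA : is_basis SA bA) (BB : is_basis SB bB)
  (BT : is_basis SAB (fun ij : 'I_n * 'I_m => star (bA ij.1) (bB ij.2))).

Lemma L1 (f : 'I_m -> ray_fun R dA) : (forall j, Defs.span SA (f j)) ->
  (fun psi => \sum_(j < m) star (f j) (bB j) psi) = @zf (dA * dB) ->
  forall j, f j = @zf dA.
Proof.
move=> Hf H0.
pose E j := proj1_sig (constructive_indefinite_description _ (basis_coord BA (Hf j))).
have EE j : f j = lin_comb (E j) bA := proj2_sig (constructive_indefinite_description _ (basis_coord BA (Hf j))).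
have sA : forall i, Defs.span SA (bA i) by case: BA.
have sB : forall j, Defs.span SB (bB j) by case: BB.
have Hz : lin_comb (fun ij : 'I_n * 'I_m => E ij.2 ij.1)
   (fun ij : 'I_n * 'I_m => star (bA ij.1) (bB ij.2)) = (fun _ => 0).
  rewrite -[RHS]H0; apply: functional_extensionality => psi.
  rewrite /lin_comb.
  under [RHS]eq_bigr => j _ do rewrite EE star_lin_l //.
  rewrite /lin_comb exchange_big pair_big /=.
  by apply: eq_bigr => -[i j].
case: BT => _ LI _.
move=> j; rewrite EE; apply: functional_extensionality => psi.
rewrite /lin_comb /zf big1 // => i _.
by rewrite (LI _ Hz (i, j)) mul0r.
Qed.

End Star.

Lemma opf_comp1 d (F : ray_fun R d) : opf_comp F 1%:M = F.
Proof.
apply: functional_extensionality => psi.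
by rewrite /opf_comp /actv mul1mx valK.
Qed.

Lemma SU1 d : is_SU (1%:M : 'M[C]_d).
Proof.
split; last exact: det1.
rewrite map_scalar_mx tr_scalar_mx mulmx1; congr (_%:M); exact: conjc1.
Qed.

End Gen.

Unset Implicit Arguments.
Set Strict Implicit.

Theorem mainTheorem5 (R : realType) (dA dB : nat)
  (SA : ray_fun R dA -> Prop) (SB : ray_fun R dB -> Prop)
  (SAB : ray_fun R (dA * dB) -> Prop)
  (star : ray_fun R dA -> ray_fun R dB -> ray_fun R (dA * dB))
  (W : ray_fun R (dA * dB) -> Prop) :
  OPF_set SA -> OPF_set SB -> OPF_set SAB ->
  OPF_product SA SB SAB star ->
  affine_rep SAB W ->
  (exists w, W w /\ w <> (fun _ => 0) /\
     forall (UA : 'M[R[i]]_dA) (UB : 'M[R[i]]_dB),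
       is_SU UA -> is_SU UB -> opf_comp w (UA *t UB) = w) ->
  forall n m (bA : 'I_n -> ray_fun R dA) (bB : 'I_m -> ray_fun R dB),
    is_basis SA bA -> is_basis SB bB ->
    ~ is_basis SAB (fun ij : 'I_n * 'I_m => star (bA ij.1) (bB ij.2)).
Proof.
move=> HA HB HAB HP [HWs [_ [_ [_ [HWc _]]]]] [w [Ww [wnz Winv]]] n m bA bB BA BB BT.
have sA : forall i, Defs.span SA (bA i) by case: BA.
have sB : forall j, Defs.span SB (bB j) by case: BB.
have uA : Defs.span SA (@unit_fun R dA) := span_in HA.1.
have uB : Defs.span SB (@unit_fun R dB) := span_in HB.1.
have [psi0 _] : exists psi0 : nzvec R dA, True.
  case: (posnP dA) => [dA0 | dApos].
    exfalso; apply: wnz; apply: functional_extensionality => -[v Hv].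
    exfalso; move: Hv; have -> : v = 0; last by rewrite eqxx.
    apply/matrixP => i j; exfalso.
    move: (ltn_ord i); move: (nat_of_ord i) => k.
    by rewrite dA0 mul0n.
  have Hnz : (const_mx 1 : 'cV[R[i]]_dA) != 0.
    apply/eqP => /matrixP /(_ (Ordinal dApos) 0); rewrite !mxE => /eqP.
    by rewrite oner_eq0.
  by exists (exist (fun v : 'cV[R[i]]_dA => v != 0) _ Hnz).
have [c Ec] := basis_coord BT (HWs _ Ww).
pose f j := lin_comb (fun i => c (i, j)) bA.
have sf : forall j, Defs.span SA (f j) by move=> j; apply: span_lin.
have Ew : w = (fun psi => \sum_(j < m) star (f j) (bB j) psi).
  rewrite Ec; apply: functional_extensionality => psi.
  under [RHS]eq_bigr => j _ do rewrite /f (star_lin_l HP) //.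
  rewrite /lin_comb exchange_big pair_big /=.
  by apply: eq_bigr => -[i j].
have HP2 := HP; case: HP2 => _ Hl Hr Huu _.
have finv : forall j U, is_SU U -> opf_comp (f j) U = f j.
  move=> j0 U HU.
  have HI := Winv U 1%:M HU (SU1 _ _).
  rewrite Ew in HI.
  have HI' : (fun psi => \sum_(j < m) star (opf_comp (f j) U) (bB j) psi)
            = (fun psi => \sum_(j < m) star (f j) (bB j) psi).
    rewrite -[in RHS]HI; apply: functional_extensionality => psi.
    transitivity (\sum_(j < m) opf_comp (star (f j) (bB j)) (U *t 1%:M) psi); last by [].
    apply: eq_bigr => j _.
    by rewrite (equiv_span HP HA HB) // ?opf_comp1 //; exact: SU1.
  have H0 : (fun psi => \sum_(j < m)
       star (fun psi => -1 * f j psi + opf_comp (f j) U psi) (bB j) psi) = @zf _ (dA * dB).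
    apply: functional_extensionality => psi.
    rewrite /zf; under eq_bigr => j _ do
      rewrite (Hl (-1) _ _ _ (sf j) (span_comp HA (sf j) HU) (sB j)).
    rewrite big_split /= -mulr_sumr.
    move/(congr1 (fun h => h psi)): HI' => /= ->.
    by rewrite mulN1r addNr.
  have := L1 HP BA BB BT (f := fun j => fun psi => -1 * f j psi + opf_comp (f j) U psi)
    (fun j => (span_closed SA).2 (-1) _ _ (sf j) (span_comp HA (sf j) HU)) H0 j0.
  move=> E; apply: functional_extensionality => psi.
  move/(congr1 (fun h => h psi)): E; rewrite /zf /= => E.
  lra.
have TA := HA.2.2.2.2.2.
have TB := HB.2.2.2.2.2.
have fa : forall j, exists a : R, f j = (fun _ => a).
  by move=> j; apply/(TA _ (sf j)) => U HU; exact: finv.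
pose a j := proj1_sig (constructive_indefinite_description _ (fa j)).
have Ea : forall j, f j = (fun _ => a j).
  by move=> j; exact: (proj2_sig (constructive_indefinite_description _ (fa j))).
pose g := lin_comb a bB.
have sg : Defs.span SB g by apply: span_lin.
have Ew2 : w = star (@unit_fun R dA) g.
  rewrite Ew (star_lin_r HP) //; apply: functional_extensionality => psi.
  rewrite /lin_comb; apply: eq_bigr => j _.
  by rewrite Ea (starC_l HP HA).
have ginv : forall U, is_SU U -> opf_comp g U = g.
  move=> U HU.
  have HI := Winv 1%:M U (SU1 _ _) HU.
  rewrite Ew2 (equiv_span HP HA HB uA sg (SU1 _ _) HU) opf_comp1 in HI.
  pose h := fun psi => -1 * g psi + opf_comp g U psi.
  have sh : Defs.span SB h.
    exact: (span_closed SB).2 (-1) _ _ sg (span_comp HB sg HU).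
  have Hh0 : star (@unit_fun R dA) h = @zf _ (dA * dB).
    rewrite /h (Hr (-1) _ _ _ uA sg (span_comp HB sg HU)).
    apply: functional_extensionality => psi; rewrite /zf.
    by rewrite HI mulN1r addNr.
  have [be Ebe] := basis_coord BB sh.
  have Hsum : (fun psi => \sum_(j < m) star (fun _ => be j) (bB j) psi) = @zf _ (dA*dB).
    rewrite -Hh0 Ebe (star_lin_r HP) //; apply: functional_extensionality => psi.
    by rewrite /lin_comb; apply: eq_bigr => j _; rewrite (starC_l HP HA).
  have be0 : forall j, be j = 0.
    move=> j.
    have := L1 HP BA BB BT (f := fun j => fun _ => be j) (fun j => span_const _ HA) Hsum j.
    by move/(congr1 (fun h => h psi0)).
  have h0 : h = @zf _ dB.
    rewrite Ebe; apply: functional_extensionality => psi; rewrite /lin_comb /zf big1 // => j _.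
    by rewrite be0 mul0r.
  apply: functional_extensionality => psi.
  move/(congr1 (fun k => k psi)): h0; rewrite /h /zf /= => E; lra.
have [b Eb] := (TB _ sg).1 ginv.
have Ewb : w = (fun _ => b).
  rewrite Ew2 Eb (starC_r HP HB) // Huu; apply: functional_extensionality => psi.
  by rewrite /unit_fun mulr1.
have b0 : b = 0 by apply: HWc; rewrite -Ewb.
by apply: wnz; rewrite Ewb b0.
Qed.
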